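(* For each $\mathbf{s} \in \mathcal{S}$, $\bar{\mathbf{p}}^{\epsilon}(\mathbf{s})$ is continuous in $\epsilon > 0$.
   Context: There are $N$ systems $\mathcal{A} = \{1,\ldots,N\}$. $B = [b_{i,j}]$ is a nonnegative $N\times N$ matrix with $b_{i,j} = \beta_{j,i} \ge 0$ (infection rate from system $j$ to system $i$), $\beta_{i,i}=0$; the directed graph with an edge $(i,j)$ iff $\beta_{i,j}>0$ is weakly connected (not necessarily strongly connected). $\boldsymbol{\lambda} \in \mathbb{R}_+^N$ is the vector of external attack rates (some entries may be zero), $\boldsymbol{\delta} > \mathbf{0}$ the recovery rates, and $\mathbf{q}(\mathbf{s}) = (q_i(s_i))_i$ the breach probabilities, where each $q_i:\mathbb{R}_+\to(0,1]$ is decreasing, strictly convex and continuously differentiable; $\mathcal{S} \subset \mathbb{R}_+^N$ is a convex feasible set of security investments. For $\epsilon > 0$, let $\boldsymbol{\lambda}^{\epsilon} := \boldsymbol{\lambda} + \epsilon \mathbf{1}$, and for fixed $\mathbf{s}$ let $\bar{\mathbf{p}}^{\epsilon}(\mathbf{s}) > \mathbf{0}$ denote the unique (strictly positive) solution $\mathbf{p}$ of $(\mathbf{1} - \mathbf{p}) \circ (\boldsymbol{\lambda}^{\epsilon} + B \mathbf{p}) - \mathbf{q}(\mathbf{s})^{-1} \circ \boldsymbol{\delta} \circ \mathbf{p} = \mathbf{0}$, where $\circ$ and $\mathbf{q}(\mathbf{s})^{-1}$ are elementwise product and inverse. *)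

(* Defs.v *)
From HB Require Import structures.
From mathcomp Require Import all_boot all_order all_algebra.
From mathcomp Require Import all_classical all_reals all_analysis.
Set Implicit Arguments. Unset Strict Implicit. Unset Printing Implicit Defensive.
Import Order.TTheory GRing.Theory Num.Theory.
Import numFieldNormedType.Exports.
Local Open Scope classical_set_scope.
Local Open Scope ring_scope.

(* beta i j = infection rate from system i to system j (beta_{i,j});
   the matrix B of the paper is beta^T, i.e. B i j = beta j i. *)

Definition weakly_connected (N : nat) (R : realType) (beta : 'M[R]_N) : Prop :=
  forall i j : 'I_N,
    connect (fun a b : 'I_N => (0 < beta a b) || (0 < beta b a)) i j.

Definition sis_eq (N : nat) (R : realType) (beta : 'M[R]_N)
    (lam delta qs p : 'rV[R]_N) : Prop :=
  forall i : 'I_N,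
    (1 - p 0 i) * (lam 0 i + \sum_(j < N) beta j i * p 0 j)
      - (qs 0 i)^-1 * delta 0 i * p 0 i = 0.

Definition lam_eps (N : nat) (R : realType) (lam : 'rV[R]_N) (eps : R)
  : 'rV[R]_N := \row_i (lam 0 i + eps).

Definition qvec (N : nat) (R : realType) (q : 'I_N -> R -> R) (s : 'rV[R]_N)
  : 'rV[R]_N := \row_i q i (s 0 i).

(* Main.v *)
Require Import Defs.
From HB Require Import structures.
From mathcomp Require Import all_boot all_order all_algebra.
From mathcomp Require Import all_classical all_reals all_analysis.
From mathcomp Require Import ring lra.
Import Order.TTheory GRing.Theory Num.Theory.
Import numFieldNormedType.Exports.
Local Open Scope classical_set_scope.
Local Open Scope ring_scope.
Lemma arith (R : realType) (L e e' u m P P' S S' c : R) : 0 <= L -> 0 < e -> 0 < e' -> 1 <= u ->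
  e' <= u * e -> u < m -> 0 < P -> P' = m * P -> 0 <= S -> 0 <= S' -> S' <= m * S -> 0 < c ->
  (1 - P) * (L + e + S) = c * P -> (1 - P') * (L + e' + S') = c * P' -> False.
Proof.
move=> L0 e0 e'0 u1 ue um P0 PP S0 S'0 SS c0 E1 E2.
have P'0 : 0 < P' by rewrite PP; apply: mulr_gt0 => //; lra.
have h1 : 0 < 1 - P'.
  have : 0 < c * P' by apply: mulr_gt0.
  rewrite -E2 => h; have hA : 0 < L + e' + S' by lra.
  by rewrite -(pmulr_lgt0 _ hA).
have h2 : c * P' < (1 - P') * (m * (L + e + S)).
  rewrite -E2 ltr_pM2l //.
  have : L <= m * L by rewrite ler_peMl //; lra.
  have : e' < m * e by apply: (le_lt_trans ue); rewrite ltr_pM2r.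
  lra.
have h3 : c * P' = m * ((1 - P) * (L + e + S)) by rewrite E1 PP; ring.
have hA : 0 < L + e + S by lra.
have hm : 0 < m by lra.
move: h2; rewrite h3 mulrA mulrA [_ * m]mulrC -mulrA -mulrA ltr_pM2l // ltr_pM2r //.
rewrite PP => h. have : P < m * P by rewrite ltr_pMl //; lra.
lra.
Qed.

Lemma key (R : realType) N (beta : 'M[R]_N) (lam : 'rV[R]_N) (c : 'I_N -> R)
  (p p' : 'rV[R]_N) (e e' u : R) :
  (forall i j, 0 <= beta i j) -> (forall i, 0 <= lam 0 i) -> (forall i, 0 < c i) ->
  0 < e -> 0 < e' -> 1 <= u -> e' <= u * e ->
  (forall i, 0 < p 0 i) -> (forall i, 0 < p' 0 i) ->
  (forall i, (1 - p 0 i) * (lam 0 i + e + \sum_(j < N) beta j i * p 0 j) = c i * p 0 i) ->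
  (forall i, (1 - p' 0 i) * (lam 0 i + e' + \sum_(j < N) beta j i * p' 0 j) = c i * p' 0 i) ->
  forall i, p' 0 i <= u * p 0 i.
Proof.
move=> b0 l0 c0 e0 e'0 u1 ue p0 p'0 E E' i.
case: (@arg_maxP _ R 'I_N i xpredT (fun k => p' 0 k / p 0 k) isT) => k _ Hk.
set m := p' 0 k / p 0 k.
have Hm : forall j, p' 0 j <= m * p 0 j.
  move=> j; have := Hk j isT; rewrite /= -/m ler_pdivrMr //.
have Pk : p' 0 k = m * p 0 k by rewrite /m divfK // gt_eqF.
have [mu|um] := leP m u.
  by apply: (le_trans (Hm i)); rewrite ler_pM2r.
exfalso.
apply: (@arith R (lam 0 k) e e' u m (p 0 k) (p' 0 k)
   (\sum_(j < N) beta j k * p 0 j) (\sum_(j < N) beta j k * p' 0 j) (c k)) => //.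
- by apply: sumr_ge0 => j _; apply: mulr_ge0 => //; apply: ltW.
- by apply: sumr_ge0 => j _; apply: mulr_ge0 => //; apply: ltW.
- rewrite mulr_sumr; apply: ler_sum => j _.
  by rewrite mulrCA ler_wpM2l.
Qed.
Theorem proposition2 (R : realType) (N : nat)
    (beta : 'M[R]_N) (lam delta : 'rV[R]_N)
    (q : 'I_N -> R -> R) (S : set 'rV[R]_N)
    (* B = beta^T is nonnegative, beta_{i,i} = 0, weakly connected graph *)
    (Hbeta_ge0 : forall i j, 0 <= beta i j)
    (Hbeta_diag : forall i, beta i i = 0)
    (Hconn : weakly_connected beta)
    (* external attack rates nonnegative, recovery rates positive *)
    (Hlam : forall i, 0 <= lam 0 i)
    (Hdelta : forall i, 0 < delta 0 i)
    (* each q_i : R_+ -> (0,1], decreasing, strictly convex, C^1 *)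
    (Hq_range : forall i (x : R), 0 <= x -> 0 < q i x <= 1)
    (Hq_decr : forall i (x y : R), 0 <= x -> x < y -> q i y < q i x)
    (Hq_sconv : forall i (x y t : R), 0 <= x -> 0 <= y -> x != y -> 0 < t < 1 ->
        q i (t * x + (1 - t) * y) < t * q i x + (1 - t) * q i y)
    (Hq_cont0 : forall i, {within `[0, +oo[, continuous (q i)})
    (Hq_der : forall i (x : R), 0 < x -> derivable (q i) x 1)
    (Hq_C1 : forall i, {in `]0, +oo[, continuous (derive1 (q i))})
    (* S convex subset of R_+^N *)
    (HS_pos : forall s, S s -> forall i, 0 <= s 0 i)
    (HS_conv : forall x y t, S x -> S y -> 0 <= t <= 1 ->
        S (t *: x + (1 - t) *: y))
    (s : 'rV[R]_N) (Hs : S s)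
    (* pbar eps = the (unique) strictly positive solution for lambda^eps *)
    (pbar : R -> 'rV[R]_N)
    (Hpbar_pos : forall eps : R, 0 < eps -> forall i, 0 < pbar eps 0 i)
    (Hpbar_sol : forall eps : R, 0 < eps ->
        sis_eq beta (lam_eps lam eps) delta (qvec q s) (pbar eps)) :
  {in `]0, +oo[, continuous pbar}.
Proof.
pose c i := (q i (s 0 i))^-1 * delta 0 i.
have c0 : forall i, 0 < c i.
  move=> i; apply: mulr_gt0 => //; rewrite invr_gt0.
  by case/andP: (Hq_range i _ (HS_pos _ Hs i)).
have E : forall eps, 0 < eps -> forall i,
    (1 - pbar eps 0 i) * (lam 0 i + eps + \sum_(j < N) beta j i * pbar eps 0 j)
      = c i * pbar eps 0 i.
  move=> eps eps0 i; have := @Hpbar_sol eps eps0 i.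
  by rewrite mxE /c mxE -mulrA => /eqP; rewrite subr_eq0 => /eqP.
have lt1 : forall eps, 0 < eps -> forall i, pbar eps 0 i < 1.
  move=> eps eps0 i; have := E eps eps0 i.
  have hA : 0 < lam 0 i + eps + \sum_(j < N) beta j i * pbar eps 0 j.
    have : 0 <= \sum_(j < N) beta j i * pbar eps 0 j.
      by apply: sumr_ge0 => j _; apply: mulr_ge0 => //; apply: ltW; apply: Hpbar_pos.
    have := Hlam i; lra.
  have hc : 0 < c i * pbar eps 0 i by apply: mulr_gt0 => //; apply: Hpbar_pos.
  move=> h; rewrite -h in hc.
  by move: hc; rewrite pmulr_lgt0 // subr_gt0.
have bnd : forall a b, 0 < a -> a <= b -> forall i,
    0 <= pbar b 0 i - pbar a 0 i <= (b - a) / a.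
  move=> a b a0 ab i.
  have b0 : 0 < b by lra.
  have h1 := @key R N beta lam c (pbar b) (pbar a) b a 1 Hbeta_ge0 Hlam c0 b0 a0
    (lexx _) ltac:(lra) (Hpbar_pos _ b0) (Hpbar_pos _ a0) (E b b0) (E a a0) i.
  have ba1 : 1 <= b / a by rewrite ler_pdivlMr // mul1r.
  have h2 := @key R N beta lam c (pbar a) (pbar b) a b (b / a) Hbeta_ge0 Hlam c0 a0 b0
    ba1 ltac:(rewrite divfK ?gt_eqF //) (Hpbar_pos _ a0) (Hpbar_pos _ b0) (E a a0) (E b b0) i.
  have h3 := lt1 a a0 i; have h4 := Hpbar_pos _ a0 i.
  have -> : (b - a) / a = b / a - 1 by rewrite mulrBl divff ?gt_eqF.
  rewrite mul1r in h1; apply/andP; split; first lra.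
  have : (b / a - 1) * pbar a 0 i <= b / a - 1.
    by rewrite ler_piMr //; [lra | apply: ltW].
  lra.
move=> x; rewrite in_itv /= andbT => x0.
apply/cvgrPdist_le => e e0.
have d0 : 0 < Num.min (x / 2) (e * x / 2).
  by rewrite lt_min; apply/andP; split; apply: divr_gt0 => //; apply: mulr_gt0.
near=> y.
have : ball x (Num.min (x / 2) (e * x / 2)) y by near: y; exists (Num.min (x / 2) (e * x / 2)) => // z /=.
rewrite /ball /= lt_min => /andP[h1 h2].
rewrite [X in X <= _]/Num.Def.normr /= mx_normrE (bigmax_le _ (ltW e0)) //= => -[j i] _.
rewrite !mxE (ord1 j) /=.
have y0 : x / 2 < y by move: h1; rewrite ltr_norml; lra.
have ypos : 0 < y by lra.
have [xy|yx] := leP x y.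
  have := bnd x y x0 xy i; move: h2; rewrite ltr_norml => h2 /andP[u1 u2].
  rewrite distrC ger0_norm //.
  suff : (y - x) / x <= e by lra.
  by rewrite ler_pdivrMr //; lra.
have := bnd y x ypos (ltW yx) i; move: h2; rewrite ltr_norml => h2 /andP[u1 u2].
rewrite ger0_norm //.
suff : (x - y) / y <= e by lra.
have : e * (x / 2) < e * y by rewrite ltr_pM2l.
rewrite mulrA ler_pdivrMr //; lra.
Unshelve. all: by end_near.
Qed.
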